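(* $(\mathbf{Z}/11\mathbf{Z})\rtimes_4\mathbf{Z}\not\simeq(\mathbf{Z}/11\mathbf{Z})\rtimes_9\mathbf{Z}$.
   Context: For $b\in(\mathbf{Z}/11\mathbf{Z})^*$, $(\mathbf{Z}/11\mathbf{Z})\rtimes_b\mathbf{Z}$ denotes the semidirect product in which the generator $1\in\mathbf{Z}$ acts on $\mathbf{Z}/11\mathbf{Z}$ by multiplication by $b$. *)

(* Defs.v *)
From HB Require Import structures.
From mathcomp Require Import all_boot all_order all_algebra.
Set Implicit Arguments. Unset Strict Implicit. Unset Printing Implicit Defensive.
Import Order.TTheory GRing.Theory Num.Theory.
Local Open Scope ring_scope.

Definition sdp11 := ('Z_11 * int)%type.

(* Multiplication of (Z/11Z) ⋊_b Z, where 1 ∈ Z acts on Z/11Z by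
   multiplication by b (so m ∈ Z acts by b^m):
   (a, m) * (c, n) = (a + b^m c, m + n). *)
Definition sdp_mul (b : 'Z_11) (x y : sdp11) : sdp11 :=
  (x.1 + b ^ x.2 * y.1, x.2 + y.2).

Definition sdp_isomorphic (b c : 'Z_11) : Prop :=
  exists f : sdp11 -> sdp11,
    bijective f /\ forall x y, f (sdp_mul b x y) = sdp_mul c (f x) (f y).

(* Main.v *)
Require Import Defs.
From mathcomp Require Import all_boot all_order all_algebra.
From mathcomp Require Import zify.
Import GRing.Theory.
Local Open Scope ring_scope.

Lemma L (v : 'Z_11) : v != 0 -> (9%:R*v != 4%:R*v) && (5%:R*v != 4%:R*v).
Proof. case: v => v lt; apply/implyP; apply/eqP.
do 11! (case: v lt => [|v] lt; [by apply/eqP; vm_compute|]). by []. Qed.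

Lemma e91 : (9%:R : 'Z_11) ^ (1 : int) = 9%:R. Proof. by apply/eqP; vm_compute. Qed.
Lemma e9m1 : (9%:R : 'Z_11) ^ (-1 : int) = 5%:R. Proof. by apply/eqP; vm_compute. Qed.

Definition pw (b : 'Z_11) (y : sdp11) (n : nat) : sdp11 := iter n (sdp_mul b y) (0, 0%Z).

Lemma pw0 (b a : 'Z_11) n : pw b (a, 0%Z) n = (a *+ n, 0%Z).
Proof.
elim: n => [//|n IH]; rewrite /pw iterS -/(pw b (a,0%Z) n) IH /sdp_mul /=.
by rewrite expr0z mul1r mulrS.
Qed.

Theorem lemma4p3 : ~ sdp_isomorphic (4%:R : 'Z_11) (9%:R : 'Z_11).
Proof.
move=> [f [[h fK hK] H]].
set g := fun y => (f y).2.
have gM x y : g (sdp_mul 4%:R x y) = (g x + g y)%R by rewrite /g H.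
have f0 : f (0, 0%Z) = (0, 0%Z).
  have E : f (0, 0%Z) = sdp_mul 9%:R (f (0,0%Z)) (f (0,0%Z)).
    by rewrite -H /sdp_mul /= mulr0 !addr0.
  move: E; case: (f (0,0%Z)) => a m /= E.
  have E1 := congr1 fst E; have E2 := congr1 snd E; simpl in E1, E2.
  have m0 : m = 0%Z.
    by move: E2; rewrite -{1}(addr0 m) => /GRing.addrI.
  move: E1; rewrite m0 expr0z mul1r -{1}(addr0 a) => /GRing.addrI <-.
  by [].
have g0 : g (0, 0%Z) = 0%Z by rewrite /g f0.
have gpw y n : g (pw 4%:R y n) = (g y *+ n)%R.
  elim: n => [|n IH]; first by rewrite /pw /= g0.
  by rewrite /pw iterS -/(pw _ y n) gM IH mulrS.
have gA a : g (a, 0%Z) = 0%Z.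
  have := gpw (a, 0%Z) 11%N; rewrite pw0.
  have -> : a *+ 11 = 0 by rewrite -mulr_natr; apply/eqP; case: a => a la; do 11! (case: a la => [|a] la; [by vm_compute|]).
  rewrite g0 => /esym/eqP; rewrite -mulr_natr mulf_eq0 orbC /=.
  by move/eqP.
set m := g (0, 1%Z).
have gT (k : nat) : g (0, k%:Z) = (m *+ k)%R.
  elim: k => [|k IH]; first by rewrite g0.
  have -> : ((0 : 'Z_11), (k.+1)%:Z) = sdp_mul 4%:R (0, k%:Z) (0, 1%Z).
    by rewrite /sdp_mul /= mulr0 addr0 -[in RHS]PoszD addn1.
  by rewrite gM IH mulrS addrC.
have gN (k : nat) : g (0, - k%:Z) = - (m *+ k)%R.
  apply/eqP; rewrite -subr_eq0 opprK -(gT k) -gM /sdp_mul /= mulr0 addr0 addNr.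
  by rewrite g0.
have gall a k : g (a, k) = (m * k)%R.
  have -> : (a, k) = sdp_mul 4%:R (a, 0%Z) (0, k).
    by rewrite /sdp_mul /= mulr0 addr0 add0r.
  rewrite gM gA add0r; case: k => k.
    by rewrite gT -mulr_natr natz.
  by rewrite NegzE gN mulrN -mulr_natr natz.
have m1 : m = 1%Z \/ m = (-1)%Z.
  have := congr1 snd (hK (0, 1%Z)); rewrite -/(g _).
  case: (h (0,1%Z)) => a k /=; rewrite gall => E.
  have : (m <= -2 \/ m = -1 \/ m = 0 \/ m = 1 \/ 2 <= m)%R by lia.
  have : (k <= -1 \/ k = 0 \/ 1 <= k)%R by lia.
  by case => [?|[?|?]]; case => [?|[?|[?|[?|?]]]]; nia.
case E0x: (f (1, 0%Z)) => [v n].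
have n0 : n = 0%Z by have := gA 1; rewrite /g E0x.
subst n.
have v0 : v != 0.
  apply/eqP=> v0; move: E0x; rewrite v0 -f0 => /(congr1 h); rewrite !fK.
  by move/(congr1 fst)/eqP; vm_compute.
case Et: (f (0, 1%Z)) => [u k0].
have km : k0 = m by rewrite /m /g Et.
subst k0.
have x4 : ((4%:R : 'Z_11), 0%Z) = sdp_mul 4%:R (1, 0%Z) (sdp_mul 4%:R (1, 0%Z) (sdp_mul 4%:R (1, 0%Z) (1, 0%Z))).
  by apply/eqP; vm_compute.
have f4 : f (4%:R, 0%Z) = (v + (v + (v + v)), 0%Z).
  by rewrite x4 !H E0x /sdp_mul /= expr0z !mul1r.
have Ecomm : sdp_mul 4%:R (0, 1%Z) (1, 0%Z) = sdp_mul 4%:R (4%:R, 0%Z) (0, 1%Z).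
  by apply/eqP; vm_compute.
have := congr1 f Ecomm; rewrite !H f4 Et E0x /sdp_mul /= expr0z mul1r.
move/(congr1 fst) => /= Ev0.
have Ev : 9%:R ^ m * v = v + (v + (v + v)).
  by apply: (@GRing.addrI _ u); rewrite Ev0 addrC.
have Ev' : 9%:R ^ m * v = 4%:R * v.
  by rewrite Ev mulr_natl !mulrS mulr0n addr0.
have := L _ v0; case: m1 => mE; move: Ev'; rewrite mE ?e91 ?e9m1 => ->;
  by rewrite eqxx ?andbF.
Qed.
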